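(* Let $k\ge 1$ and $l\geq 1$ be integers and $n=2^k$. Then for every $1\leq s\leq 2^k$, $a_{l2^{k-1},s}+a_{l2^{k-1},s-2^{k-1}}\equiv 0\pmod{2^l}$.
   Context: Let $D:\mathbb{Z}^n\to\mathbb{Z}^n$, $D(x_1,\dots,x_n)=(x_1+x_2,x_2+x_3,\dots,x_n+x_1)$. For integers $r\ge 0$ and $1\le s\le n$, define the integers $a_{r,s}$ by $D^r(0,0,\dots,0,1)=(a_{r,n},a_{r,n-1},\dots,a_{r,1})$; equivalently, $a_{r,s}$ is the coefficient of $x_s$ in the first coordinate of $D^r(x_1,\dots,x_n)$. The second index is read modulo $n$ (representatives $1,\dots,n$). *)

(* Defs.v *)
From HB Require Import structures.
From mathcomp Require Import all_boot all_order all_algebra.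
Set Implicit Arguments. Unset Strict Implicit. Unset Printing Implicit Defensive.
Import Order.TTheory GRing.Theory Num.Theory.
Local Open Scope ring_scope.

(* Vectors in Z^n are represented as functions nat -> int, with 0-based
   coordinates: coordinate i (0 <= i < n) is x_{i+1}.  All indices are
   read modulo n. *)

Definition Dop (n : nat) (x : nat -> int) : nat -> int :=
  fun i => x (i %% n)%N + x (i.+1 %% n)%N.

Definition evec (n j : nat) : nat -> int :=
  fun i => if (i %% n == j)%N then 1 else 0.

(* a_{r,s} = coefficient of x_s in the first coordinate of D^r(x);
   since D^r is linear this is the first coordinate of D^r(e_s).
   The index s is an integer read modulo n (representatives 1..n),
   i.e. 0-based coordinate (s-1) mod n. *)
Definition acoef (n r : nat) (s : int) : int :=
  iter r (Dop n) (evec n `|((s - 1) %% (n%:Z))%Z|%N) 0%N.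

(* Main.v *)
Require Import Defs.
From mathcomp Require Import all_boot all_order all_algebra.
From mathcomp Require Import ring zify.
Import Order.TTheory GRing.Theory Num.Theory.
Local Open Scope ring_scope.

Lemma iterDS n r x i : iter r.+1 (Dop n) x i =
  iter r (Dop n) x (i %% n)%N + iter r (Dop n) x (i.+1 %% n)%N.
Proof. by []. Qed.

Lemma iter_ext n r x y : (forall j, x j = y j) ->
  forall i, iter r (Dop n) x i = iter r (Dop n) y i.
Proof.
move=> H; elim: r => [|r IH] i; first exact: H.
by rewrite !iterDS !IH.
Qed.

Lemma iter_add n r x y i :
  iter r (Dop n) (fun j => x j + y j) i = iter r (Dop n) x i + iter r (Dop n) y i.
Proof.
elim: r i => [|r IH] i; first by [].
rewrite !iterDS !IH; ring.
Qed.

Lemma iter_scale n r c x i :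
  iter r (Dop n) (fun j => c * x j) i = c * iter r (Dop n) x i.
Proof.
elim: r i => [|r IH] i; first by [].
rewrite !iterDS !IH; ring.
Qed.

Lemma iter_mod2 n a x i :
  (2 %| iter (2 ^ a) (Dop n) x i - (x (i %% n)%N + x ((i + 2 ^ a) %% n)%N))%Z.
Proof.
elim: a x i => [|a IH] x i.
  by rewrite expn0 /= /Dop addn1 subrr dvdz0.
have -> : (2 ^ a.+1 = 2 ^ a + 2 ^ a)%N by rewrite expnS mul2n addnn.
rewrite iterD.
set y := iter (2 ^ a) (Dop n) x.
have A := IH y i.
have B := IH x (i %% n)%N.
have C := IH x ((i + 2 ^ a) %% n)%N.
rewrite modn_mod modnDml in B.
rewrite modn_mod modnDml -addnA in C.
set y' := iter (2 ^ a) (Dop n) y i.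
set xa := x (i %% n)%N. set xb := x ((i + 2 ^ a) %% n)%N.
set xc := x ((i + (2 ^ a + 2 ^ a)) %% n)%N.
rewrite -/xa -/xb in B. rewrite -/xb -/xc in C. rewrite -/y' in A.
set yb := y (i %% n)%N in A B. set yd := y ((i + 2 ^ a) %% n)%N in A C.
have -> : y' - (xa + xc) = (y' - (yb + yd)) + (yb - (xa + xb)) + (yd - (xb + xc)) + xb * 2 by ring.
apply: rpredD; last by apply: dvdz_mull; exact: dvdzz.
by apply: rpredD; [apply: rpredD; [exact: A|exact: B]|exact: C].
Qed.

Definition Pm (n m : nat) (x : nat -> int) :=
  forall j, x (j %% n)%N = x ((j + m) %% n)%N.

Lemma Pm_Dop n m x : Pm n m x -> Pm n m (Dop n x).
Proof.
move=> H j; rewrite /Dop !modn_mod.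
have E1 : ((j %% n).+1 %% n = j.+1 %% n)%N by rewrite -[(j %% n).+1]addn1 -[j.+1]addn1 modnDml.
have E2 : (((j + m) %% n).+1 %% n = (j.+1 + m) %% n)%N
  by rewrite -[((j + m) %% n).+1]addn1 -[j.+1]addn1 modnDml addnAC.
by rewrite E1 E2 H (H j.+1).
Qed.

Lemma Pm_iter n m r x : Pm n m x -> Pm n m (iter r (Dop n) x).
Proof. by move=> H; elim: r => [|r IH] //=; apply: Pm_Dop. Qed.

Lemma main_div a l x : Pm (2 ^ a.+1) (2 ^ a) x ->
  forall i, ((2 ^ l)%:Z %| iter (l * 2 ^ a) (Dop (2 ^ a.+1)) x i)%Z.
Proof.
set n := (2 ^ a.+1)%N; set m := (2 ^ a)%N.
have Hnm : n = (m + m)%N by rewrite /n /m expnS mul2n addnn.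
elim: l x => [|l IH] x Px i; first by rewrite expn0 dvd1z.
rewrite mulSn iterD.
set y := iter (l * m) (Dop n) x.
have Py : Pm n m y := @Pm_iter n m (l * m) x Px.
have Dy : forall j, ((2 ^ l)%:Z %| y j)%Z by move=> j; apply: IH.
set z := fun j => (y j %/ (2 ^ l)%:Z)%Z.
have Ey : forall j, y j = (2 ^ l)%:Z * z j by move=> j; rewrite mulrC divzK.
have Pz : Pm n m z by move=> j; rewrite /z Py.
rewrite (@iter_ext n m _ _ Ey) iter_scale expnSr PoszM.
apply: dvdz_mul; first exact: dvdzz.
have H := iter_mod2 n a z i.
rewrite -/m -Pz in H.
have -> : iter m (Dop n) z i = (iter m (Dop n) z i - (z (i %% n)%N + z (i %% n)%N)) + z (i %% n)%N * 2 by ring.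
apply: rpredD; last by apply: dvdz_mull; exact: dvdzz.
exact: H.
Qed.

Theorem lemma4p6 (k l s : nat) :
  (1 <= k)%N -> (1 <= l)%N -> (1 <= s <= 2 ^ k)%N ->
  ((2 ^ l)%:Z %| acoef (2 ^ k) (l * 2 ^ k.-1) s%:Z
                 + acoef (2 ^ k) (l * 2 ^ k.-1) (s%:Z - (2 ^ k.-1)%:Z))%Z.
Proof.
case: k => [|a] // _ _ /andP[s1 sn] /=.
set n := (2 ^ a.+1)%N; set m := (2 ^ a)%N.
have Hnm : n = (m + m)%N by rewrite /n /m expnS mul2n addnn.
have n0 : (0 < n)%N by rewrite expn_gt0.
set t := (s - 1)%N.
have tn : (t < n)%N by rewrite /t; lia.
have Et : `|((s%:Z - 1) %% n%:Z)%Z|%N = t.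
  have -> : s%:Z - 1 = t%:Z by rewrite /t subzn.
  by rewrite modz_nat modn_small.
have Et' : `|((s%:Z - m%:Z - 1) %% n%:Z)%Z|%N = ((t + m) %% n)%N.
  have -> : s%:Z - m%:Z - 1 = (t + m)%N%:Z - n%:Z.
    have Es : ((s - 1)%N)%:Z = s%:Z - 1 by rewrite subzn.
    rewrite Hnm /t !PoszD Es; ring.
  by rewrite -modzDr subrK modz_nat.
rewrite /acoef Et Et' -iter_add.
apply: main_div => j.
rewrite /evec !modn_mod.
have e1 : (((j + m) %% n == (t + m) %% n) = (j %% n == t))%N.
  by rewrite eqn_modDr -{2}(modn_small tn).
have e2 : (((j + m) %% n == t) = (j %% n == (t + m) %% n))%N.
  rewrite -{1}(modn_small tn) -(eqn_modDr m) -addnA -Hnm modnDr.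
  by [].
by rewrite e1 e2 addrC.
Qed.
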